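(* Let $\epsilon\in(0,1)$, let $m\ge 1$ and $f\in\mathbb R_+^m$ (entrywise nonnegative), and set $L:=\frac{2}{\epsilon}-1$. Then the function $z\mapsto\mathcal G_\epsilon(z;f)$ on $\mathbb C^m$ is continuously differentiable and its gradient is Lipschitz continuous with constant $L$: $$\|\nabla_z\mathcal G_\epsilon(z;f)-\nabla_z\mathcal G_\epsilon(y;f)\|\le L\|z-y\|\qquad\forall\, z,y\in\mathbb C^m.$$
   Context: For $x\in\mathbb C$ and $b\ge 0$, the smooth truncated amplitude-Gaussian metric is built from $$g_\epsilon(x;b):=\begin{cases}\frac{1-\epsilon}{2}\left(b-\frac{1}{\epsilon}|x|^2\right), & \text{if } |x|<\epsilon\sqrt b,\\[2pt] \frac12\big(|x|-\sqrt b\big)^2, & \text{otherwise,}\end{cases}$$ and for $z\in\mathbb C^m$, $f\in\mathbb R_+^m$, $\mathcal G_\epsilon(z;f):=\sum_{j}g_\epsilon(z(j);f(j))$. Real-valued functions of complex vectors are differentiated by identifying $\mathbb C^m$ with $\mathbb R^{2m}$ (real and imaginary parts); the gradient is the real gradient written back as a complex vector (so e.g. $\nabla_x\frac12(|x|-\sqrt b)^2=(1-\sqrt b/|x|)x$ for $x\neq0$). $\|\cdot\|$ is the Euclidean ($\ell^2$) norm. *)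

(* Defs.v *)
(* C^m is identified with R^(2m), represented as
   'M[R]_(m,2): row j holds (Re z_j, Im z_j). *)
From HB Require Import structures.
From mathcomp Require Import all_boot all_order all_algebra.
From mathcomp Require Import all_classical all_reals all_analysis.
Set Implicit Arguments. Unset Strict Implicit. Unset Printing Implicit Defensive.
Import Order.TTheory GRing.Theory Num.Theory.
Import numFieldNormedType.Exports.
Local Open Scope ring_scope.

Section Defs.
Variable R : realType.

Definition cabs (a b : R) : R := Num.sqrt (a ^+ 2 + b ^+ 2).

Definition geps (eps : R) (a b bb : R) : R :=
  if cabs a b < eps * Num.sqrt bb
  then (1 - eps) / 2 * (bb - (cabs a b) ^+ 2 / eps)
  else 1 / 2 * (cabs a b - Num.sqrt bb) ^+ 2.

Definition Geps (m : nat) (eps : R) (f : 'I_m -> R) (z : 'M[R]_(m, 2)) : R :=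
  \sum_(j < m) geps eps (z j 0) (z j 1) (f j).

(* real inner product on C^m ~ R^(2m): Re <w, z> *)
Definition rdot (m : nat) (w z : 'M[R]_(m, 2)) : R :=
  \sum_(j < m) \sum_(k < 2) w j k * z j k.

Definition enorm (m : nat) (z : 'M[R]_(m, 2)) : R :=
  Num.sqrt (\sum_(j < m) \sum_(k < 2) z j k ^+ 2).

End Defs.

(* Main.v *)
Require Import Defs.
From HB Require Import structures.
From mathcomp Require Import all_boot all_order all_algebra.
From mathcomp Require Import all_classical all_reals all_analysis.
From mathcomp Require Import ring lra.
Import Order.TTheory GRing.Theory Num.Theory.
Import numFieldNormedType.Exports.
Local Open Scope ring_scope.

Section Scalar.
Variable R : realType.
Implicit Types (rho a b c d eps bb : R).

Definition sc rho a b : R := if cabs a b <= rho then 1 else rho / cabs a b.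

Lemma cabs_ge0 a b : 0 <= cabs a b.
Proof. exact: sqrtr_ge0. Qed.

Lemma cabs_sq a b : cabs a b ^+ 2 = a ^+ 2 + b ^+ 2.
Proof. by rewrite /cabs sqr_sqrtr // addr_ge0 // sqr_ge0. Qed.

Lemma sc_spec rho a b : 0 <= rho ->
  (cabs a b <= rho /\ sc rho a b = 1) \/
  (rho < cabs a b /\ sc rho a b * cabs a b = rho /\ 0 < cabs a b /\ 0 <= sc rho a b
   /\ sc rho a b < 1).
Proof.
move=> r0; rewrite /sc; case: leP => h; [by left|right].
have c0 : 0 < cabs a b by apply: le_lt_trans h.
split=> //; split; first by rewrite divfK // gt_eqF.
split=> //; split; first by rewrite divr_ge0 // ltW.
by rewrite ltr_pdivrMr // mul1r.
Qed.

Lemma cs2 a b c d : (a * c + b * d) ^+ 2 <= (a ^+ 2 + b ^+ 2) * (c ^+ 2 + d ^+ 2).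
Proof.
rewrite -subr_ge0.
have -> : (a ^+ 2 + b ^+ 2) * (c ^+ 2 + d ^+ 2) - (a * c + b * d) ^+ 2
  = (a * d - b * c) ^+ 2 by ring.
exact: sqr_ge0.
Qed.

Lemma sc_ball rho a b : 0 <= rho ->
  0 <= sc rho a b /\ (sc rho a b * a) ^+ 2 + (sc rho a b * b) ^+ 2 <= rho ^+ 2.
Proof.
move=> r0; have := cabs_sq a b; have := cabs_ge0 a b.
case: (sc_spec rho a b r0) => [[h ->]|[h [e [p [s0 s1]]]]] q hq.
  split=> //; rewrite !mul1r -hq; nra.
by split=> //; rewrite !exprMn -mulrDr -hq -exprMn e.
Qed.

Lemma sq_le (u v : R) : 0 <= v -> u ^+ 2 <= v ^+ 2 -> u <= v.
Proof. move=> v0 h; nra. Qed.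

Lemma proj_vi rho a b q1 q2 : 0 <= rho -> q1 ^+ 2 + q2 ^+ 2 <= rho ^+ 2 ->
  (a - sc rho a b * a) * (q1 - sc rho a b * a)
  + (b - sc rho a b * b) * (q2 - sc rho a b * b) <= 0.
Proof.
move=> r0 hq; have := cabs_sq a b; have := cabs_ge0 a b.
case: (sc_spec rho a b r0) => [[h ->]|[h [e [p [s0 s1]]]]] q hr.
  by rewrite !mul1r !subrr !mul0r addr0.
set r := cabs a b in h e p hr *; set s := sc rho a b in e s0 s1 *.
have u : a * q1 + b * q2 <= rho * r.
  apply: sq_le; first by rewrite mulr_ge0 // ltW.
  apply: le_trans (cs2 a b q1 q2) _; rewrite -hr exprMn mulrC.
  by rewrite ler_wpM2r // sqr_ge0.
have -> : (a - s * a) * (q1 - s * a) + (b - s * b) * (q2 - s * b)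
  = (1 - s) * ((a * q1 + b * q2) - s * r ^+ 2) by rewrite hr; ring.
rewrite expr2 mulrA e.
apply: mulr_ge0_le0; lra.
Qed.

Definition Hub rho a b : R :=
  sc rho a b * (a ^+ 2 + b ^+ 2) - sc rho a b ^+ 2 * (a ^+ 2 + b ^+ 2) / 2.

Lemma Hub_ge rho a b q1 q2 : 0 <= rho -> q1 ^+ 2 + q2 ^+ 2 <= rho ^+ 2 ->
  q1 * a + q2 * b - (q1 ^+ 2 + q2 ^+ 2) / 2 <= Hub rho a b.
Proof.
move=> r0 hq; rewrite /Hub; have := cabs_sq a b; have := cabs_ge0 a b.
case: (sc_spec rho a b r0) => [[h ->]|[h [e [p [s0 s1]]]]] q hr.
  rewrite !mul1r expr1n mul1r; have := sqr_ge0 (a - q1); have := sqr_ge0 (b - q2); nra.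
set r := cabs a b in h e p hr *; set s := sc rho a b in e s0 s1 *.
set n := Num.sqrt (q1 ^+ 2 + q2 ^+ 2).
have n0 : 0 <= n by exact: sqrtr_ge0.
have n2 : n ^+ 2 = q1 ^+ 2 + q2 ^+ 2 by rewrite sqr_sqrtr // addr_ge0 // sqr_ge0.
have nr : n <= rho by apply: sq_le; lra.
have u : q1 * a + q2 * b <= n * r.
  apply: sq_le; first by rewrite mulr_ge0 // ltW.
  apply: le_trans (cs2 q1 q2 a b) _; rewrite -hr -n2 exprMn.
  by [].
rewrite -hr -n2.
have -> : s * r ^+ 2 - s ^+ 2 * r ^+ 2 / 2 = rho * r - rho ^+ 2 / 2.
  by rewrite -e; ring.
have : 0 <= (rho - n) * (r - rho) by rewrite mulr_ge0 //; lra.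
nra.
Qed.


Lemma firm rho a b c d : 0 <= rho ->
  (sc rho a b * a - sc rho c d * c) ^+ 2 + (sc rho a b * b - sc rho c d * d) ^+ 2
  <= (a - c) * (sc rho a b * a - sc rho c d * c)
     + (b - d) * (sc rho a b * b - sc rho c d * d).
Proof.
move=> r0.
have [_ bx] := sc_ball rho a b r0; have [_ by_] := sc_ball rho c d r0.
have v1 := proj_vi rho a b _ _ r0 by_; have v2 := proj_vi rho c d _ _ r0 bx.
set s := sc rho a b in v1 v2 bx *; set t := sc rho c d in v1 v2 by_ *.
nra.
Qed.

Lemma firm_cons (d1 d2 p1 p2 : R) :
  p1 ^+ 2 + p2 ^+ 2 <= d1 * p1 + d2 * p2 ->
  d1 * p1 + d2 * p2 <= d1 ^+ 2 + d2 ^+ 2 /\ p1 ^+ 2 + p2 ^+ 2 <= d1 ^+ 2 + d2 ^+ 2.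
Proof.
move=> h; have cs := cs2 d1 d2 p1 p2.
set S := d1 * p1 + d2 * p2 in h cs *.
set T := p1 ^+ 2 + p2 ^+ 2 in h cs *.
set D := d1 ^+ 2 + d2 ^+ 2 in cs *.
have T0 : 0 <= T by rewrite /T addr_ge0 // sqr_ge0.
have D0 : 0 <= D by rewrite /D addr_ge0 // sqr_ge0.
have SD : S <= D.
  have S0 : 0 <= S by apply: le_trans h.
  have : S ^+ 2 <= D * S by apply: le_trans cs _; rewrite ler_wpM2l.
  nra.
split=> //; exact: le_trans h SD.
Qed.

Lemma geps_formula eps a b bb : 0 < eps -> eps < 1 -> 0 <= bb ->
  geps eps a b bb = (a ^+ 2 + b ^+ 2) / 2 - Hub (eps * Num.sqrt bb) a b / eps
                    + (1 - eps) * bb / 2.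
Proof.
move=> e0 e1 b0.
have sb0 : 0 <= Num.sqrt bb := sqrtr_ge0 bb.
have sb2 : bb = Num.sqrt bb ^+ 2 by rewrite sqr_sqrtr.
have r0 : 0 <= eps * Num.sqrt bb by rewrite mulr_ge0 // ltW.
have hr := cabs_sq a b.
have ne : eps != 0 by rewrite gt_eqF.
rewrite /geps /Hub -hr.
set r := cabs a b in hr *; set sb := Num.sqrt bb in sb0 sb2 r0 *.
case: (sc_spec (eps * sb) a b r0) => [[h ->]|[h [e [p [s0 s1]]]]].
  case: (boolP (r < eps * sb)) => h2.
    by rewrite sb2; field.
  rewrite -leNgt in h2.
  have -> : r = eps * sb by apply/le_anti/andP; split.
  by rewrite sb2; field.
rewrite ltNge (ltW h) /=.
set s := sc (eps * sb) a b in e s0 s1 *.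
have -> : s * r ^+ 2 - s ^+ 2 * r ^+ 2 / 2 = (s * r) * r - (s * r) ^+ 2 / 2 by ring.
by rewrite e sb2; field; rewrite gt_eqF.
Qed.

Definition gr1 rho eps a b : R := a - sc rho a b * a / eps.
Definition gr2 rho eps a b : R := b - sc rho a b * b / eps.

Lemma lip2 rho eps a b c d : 0 <= rho -> 0 < eps -> eps < 1 ->
  (gr1 rho eps a b - gr1 rho eps c d) ^+ 2 + (gr2 rho eps a b - gr2 rho eps c d) ^+ 2
  <= (2 / eps - 1) ^+ 2 * ((a - c) ^+ 2 + (b - d) ^+ 2).
Proof.
move=> r0 e0 e1.
have [SD TD] := firm_cons _ _ _ _ (firm rho a b c d r0).
have F := firm rho a b c d r0.
rewrite /gr1 /gr2.
set s := sc rho a b in SD TD F *; set t := sc rho c d in SD TD F *.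
set u := eps^-1.
have u1 : 1 < u by rewrite /u invf_gt1.
have -> : (a - s * a / eps - (c - t * c / eps)) = (a - c) - u * (s * a - t * c)
  by rewrite /u; ring.
have -> : (b - s * b / eps - (d - t * d / eps)) = (b - d) - u * (s * b - t * d)
  by rewrite /u; ring.
set p1 := s * a - t * c in SD TD F *; set p2 := s * b - t * d in SD TD F *.
set d1 := a - c in SD TD F *; set d2 := b - d in SD TD F *.
set S := d1 * p1 + d2 * p2 in SD TD F *.
set T := p1 ^+ 2 + p2 ^+ 2 in SD TD F *.
set D := d1 ^+ 2 + d2 ^+ 2 in SD TD F *.
have T0 : 0 <= T by rewrite /T addr_ge0 // sqr_ge0.
have -> : (d1 - u * p1) ^+ 2 + (d2 - u * p2) ^+ 2 = D - 2 * u * S + u ^+ 2 * T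
  by rewrite /D /S /T; ring.
rewrite -subr_ge0.
have -> : (2 * u - 1) ^+ 2 * D - (D - 2 * u * S + u ^+ 2 * T)
  = (4 * u ^+ 2 - 4 * u) * (D - T) + 2 * u * (S - T) + (3 * u ^+ 2 - 2 * u) * T
  by ring.
have h1 : 0 <= (4 * u ^+ 2 - 4 * u) * (D - T) by apply: mulr_ge0; nra.
have h2 : 0 <= 2 * u * (S - T) by apply: mulr_ge0; nra.
have h3 : 0 <= (3 * u ^+ 2 - 2 * u) * T by apply: mulr_ge0; nra.
lra.
Qed.

Lemma Hub_def rho a b : Hub rho a b =
  (sc rho a b * a) * a + (sc rho a b * b) * b
  - ((sc rho a b * a) ^+ 2 + (sc rho a b * b) ^+ 2) / 2.
Proof. rewrite /Hub; ring. Qed.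

Lemma quad_bound eps bb a b h1 h2 : 0 < eps -> eps < 1 -> 0 <= bb ->
  `| geps eps (a + h1) (b + h2) bb - geps eps a b bb
     - (gr1 (eps * Num.sqrt bb) eps a b * h1 + gr2 (eps * Num.sqrt bb) eps a b * h2) |
  <= (1 / 2 + 1 / eps) * (h1 ^+ 2 + h2 ^+ 2).
Proof.
move=> e0 e1 b0.
have r0 : 0 <= eps * Num.sqrt bb by rewrite mulr_ge0 // ?ltW // sqrtr_ge0.
rewrite !geps_formula // /gr1 /gr2.
set rho := eps * Num.sqrt bb in r0 *.
have [_ bx] := sc_ball rho a b r0; have [_ by_] := sc_ball rho (a + h1) (b + h2) r0.
have g1 := Hub_ge rho (a + h1) (b + h2) _ _ r0 bx.
have g2 := Hub_ge rho a b _ _ r0 by_.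
have hx := Hub_def rho a b; have hy := Hub_def rho (a + h1) (b + h2).
have [SD _] := firm_cons _ _ _ _ (firm rho (a + h1) (b + h2) a b r0).
set s := sc rho a b in bx g1 hx SD *.
set t := sc rho (a + h1) (b + h2) in by_ g2 hy SD *.
set Hx := Hub rho a b in g1 g2 hx *.
set Hy := Hub rho (a + h1) (b + h2) in g1 g2 hy *.
set D := Hy - Hx - (s * a * h1 + s * b * h2).
have D0 : 0 <= D by rewrite /D; nra.
have D1 : D <= h1 ^+ 2 + h2 ^+ 2.
  rewrite /D; have e3 : a + h1 - a = h1 by ring.
  have e4 : b + h2 - b = h2 by ring.
  rewrite e3 e4 in SD; nra.
set u := eps^-1.
have u0 : 0 < u by rewrite /u invr_gt0.
have -> : ((a + h1) ^+ 2 + (b + h2) ^+ 2) / 2 - Hy / eps + (1 - eps) * bb / 2 -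
    ((a ^+ 2 + b ^+ 2) / 2 - Hx / eps + (1 - eps) * bb / 2) -
    ((a - s * a / eps) * h1 + (b - s * b / eps) * h2)
  = (h1 ^+ 2 + h2 ^+ 2) / 2 - u * D by rewrite /D /u; field; rewrite gt_eqF.
rewrite ler_norml; apply/andP; split.
  have : u * D <= u * (h1 ^+ 2 + h2 ^+ 2) by rewrite ler_wpM2l // ltW.
  have := sqr_ge0 h1; have := sqr_ge0 h2.
  rewrite /u !mul1r; nra.
have : 0 <= u * D by rewrite mulr_ge0 // ltW.
have := sqr_ge0 h1; have := sqr_ge0 h2.
rewrite !mul1r -/u; nra.
Qed.

End Scalar.
Arguments gr1 {R}. Arguments gr2 {R}. Arguments sc {R}. Arguments Hub {R}.
Arguments lip2 {R}. Arguments quad_bound {R}.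

Section Mat.
Variable R : realType.

Lemma entry_le {m n} (x : 'M[R]_(m, n)) i j : `|x i j| <= `|x|.
Proof.
rewrite [leRHS]/Num.norm /= mx_normrE; apply/bigmax_geP; right.
by exists (i, j).
Qed.

Lemma sum2 (F : 'I_2 -> R) : \sum_(k < 2) F k = F 0 + F 1.
Proof.
rewrite !big_ord_recl big_ord0 addr0; congr (F _ + F _); exact/val_inj.
Qed.

Lemma term_le {m} (F : 'I_m -> 'I_2 -> R) j k : (forall j k, 0 <= F j k) ->
  F j k <= \sum_(j < m) \sum_(k < 2) F j k.
Proof.
move=> h; rewrite (bigD1 j) //= (bigD1 k) //= -addrA lerDl.
apply: addr_ge0; first by apply: sumr_ge0 => i _; apply: h.
by apply: sumr_ge0 => i _; apply: sumr_ge0 => l _; apply: h.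
Qed.

Lemma sumsq_le {m} (x : 'M[R]_(m, 2)) :
  \sum_(j < m) \sum_(k < 2) x j k ^+ 2 <= (m * 2)%:R * `|x| ^+ 2.
Proof.
apply: (@le_trans _ _ (\sum_(j < m) \sum_(k < 2) `|x| ^+ 2)).
  apply: ler_sum => j _; apply: ler_sum => k _.
  have h1 := entry_le x j k; have h0 := normr_ge0 (x j k).
  rewrite -[x j k ^+ 2]real_normK ?num_real //; nra.
by rewrite !sumr_const !card_ord -mulrnA mulr_natl mulnC.
Qed.

Lemma enorm_ge {m} (x : 'M[R]_(m, 2)) : `|x| <= enorm x.
Proof.
rewrite [leLHS]/Num.norm /= mx_normrE; apply/bigmax_leP; split.
  exact: sqrtr_ge0.
move=> [j k] _ /=; rewrite -sqrtr_sqr ler_sqrt; last first.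
  by apply: sumr_ge0 => i _; apply: sumr_ge0 => l _; exact: sqr_ge0.
apply: (term_le (fun j k => x j k ^+ 2)) => i l; exact: sqr_ge0.
Qed.

Lemma enorm_le {m} (x : 'M[R]_(m, 2)) :
  enorm x <= Num.sqrt (m * 2)%:R * `|x|.
Proof.
rewrite /enorm -(ger0_norm (normr_ge0 x)) -sqrtr_sqr -sqrtrM ?ler0n //.
by rewrite ler_sqrt ?mulr_ge0 ?ler0n ?sqr_ge0 // (sumsq_le x).
Qed.

Lemma lip_cont (V W : normedModType R) (g : V -> W) (k : R) : 0 < k ->
  (forall x y, `|g x - g y| <= k * `|x - y|) -> continuous g.
Proof.
move=> k0 H x; apply/cvgrPdist_lt => e e0.
near=> y; apply: le_lt_trans (H x y) _; rewrite -ltr_pdivlMl //.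
near: y; apply: cvgr_dist_lt; first exact: cvg_id.
by rewrite mulr_gt0 // invr_gt0.
Unshelve. all: by end_near. Qed.

End Mat.
Arguments entry_le {R m n}. Arguments sum2 {R}. Arguments term_le {R m}.
Arguments sumsq_le {R m}. Arguments enorm_ge {R m}. Arguments enorm_le {R m}.
Arguments lip_cont {R V W}.

Section Lin.
Variables (R : realType) (m : nat) (G : 'M[R]_(m, 2)).

Definition rdotf (h : 'M[R]_(m, 2)) : R := rdot G h.

Lemma rdotf_linear : linear_for *:%R rdotf.
Proof.
move=> a u v; rewrite /rdotf /rdot scaler_sumr -big_split /=.
apply: eq_bigr => j _; rewrite scaler_sumr -big_split /=.
apply: eq_bigr => k _; rewrite !mxE.
rewrite /GRing.scale /=. ring.
Qed.

HB.instance Definition _ := GRing.isLinear.Build R 'M[R]_(m, 2) R *:%R rdotf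
  rdotf_linear.

Lemma rdotf_cont : continuous rdotf.
Proof.
apply: (@lip_cont R _ _ rdotf (\sum_(j < m) \sum_(k < 2) `|G j k| + 1)).
  by rewrite ltr_wpDl // sumr_ge0 // => j _; rewrite sumr_ge0.
move=> x y; rewrite -linearB /= /rdotf /rdot.
apply: le_trans (ler_norm_sum _ _ _) _.
rewrite mulrDl mul1r mulr_suml.
apply: (@le_trans _ _ (\sum_(j < m) (\sum_(k < 2) `|G j k|) * `|x - y|)); last by rewrite lerDl normr_ge0.
apply: ler_sum => j _; apply: le_trans (ler_norm_sum _ _ _) _.
rewrite mulr_suml; apply: ler_sum => k _; rewrite normrM.
by rewrite ler_wpM2l // entry_le.
Qed.

End Lin.
Arguments rdotf {R m}. Arguments rdotf_cont {R m}.

Section Main.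
Variables (R : realType) (m : nat) (eps : R) (f : 'I_m -> R).

Definition gradG (z : 'M[R]_(m, 2)) : 'M[R]_(m, 2) :=
  \matrix_(j, k) (if k == 0 then gr1 (eps * Num.sqrt (f j)) eps (z j 0) (z j 1)
                  else gr2 (eps * Num.sqrt (f j)) eps (z j 0) (z j 1)).

Lemma gradG0 z j : gradG z j 0 = gr1 (eps * Num.sqrt (f j)) eps (z j 0) (z j 1).
Proof. by rewrite mxE eqxx. Qed.

Lemma gradG1 z j : gradG z j 1 = gr2 (eps * Num.sqrt (f j)) eps (z j 0) (z j 1).
Proof. by rewrite mxE. Qed.

Hypotheses (e0 : 0 < eps) (e1 : eps < 1) (f0 : forall j, 0 <= f j).

Lemma rho0 j : 0 <= eps * Num.sqrt (f j).
Proof. by rewrite mulr_ge0 ?sqrtr_ge0 // ltW. Qed.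

Lemma L0 : 0 <= 2 / eps - 1.
Proof. rewrite subr_ge0 ler_pdivlMr // mul1r; apply: le_trans (ltW e1) _; by rewrite ler1n. Qed.

Lemma gradG_lip z y :
  enorm (gradG z - gradG y) <= (2 / eps - 1) * enorm (z - y).
Proof.
rewrite /enorm -(ger0_norm L0) -sqrtr_sqr -sqrtrM ?sqr_ge0 // ler_sqrt; last first.
  by rewrite mulr_ge0 ?sqr_ge0 // sumr_ge0 // => j _; rewrite sumr_ge0 // => k _; rewrite sqr_ge0.
rewrite mulr_sumr; apply: ler_sum => j _; rewrite !sum2 !mxE.
rewrite -!gradG0 -!gradG1 !gradG0 !gradG1.
exact: lip2 (rho0 j) e0 e1.
Qed.

Lemma Gquad z h : `|Geps eps f (h + z) - Geps eps f z - rdot (gradG z) h|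
  <= (1 / 2 + 1 / eps) * (m * 2)%:R * `|h| ^+ 2.
Proof.
rewrite /Geps /rdot -!sumrB; apply: le_trans (ler_norm_sum _ _ _) _.
have C0 : 0 <= 1 / 2 + 1 / eps by rewrite addr_ge0 // divr_ge0 // ltW.
rewrite -mulrA; apply: le_trans _ (ler_wpM2l C0 (sumsq_le h)).
rewrite mulr_sumr; apply: ler_sum => j _; rewrite !sum2 gradG0 gradG1 !mxE.
rewrite [h j 0 + _]addrC [h j 1 + _]addrC.
exact: quad_bound e0 e1 (f0 j).
Qed.

End Main.
Arguments gradG {R m}. Arguments L0 {R eps}. Arguments gradG_lip {R m eps f}.
Arguments Gquad {R m eps f}.

Theorem lemma2p1 (R : realType) (eps : R) (m : nat) (f : 'I_m -> R) :
  0 < eps -> eps < 1 -> (0 < m)%N -> (forall j, 0 <= f j) ->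
  exists grad : 'M[R]_(m, 2) -> 'M[R]_(m, 2),
    (forall z : 'M[R]_(m, 2),
        differentiable (Geps eps f) z /\
        forall h : 'M[R]_(m, 2), 'd (Geps eps f) z h = rdot (grad z) h) /\
    continuous grad /\
    (forall z y : 'M[R]_(m, 2),
        enorm (grad z - grad y) <= (2 / eps - 1) * enorm (z - y)).
Proof.
move=> e0 e1 m0 f0; exists (gradG eps f); split; last split.
- move=> z.
  have dfc : continuous (rdotf (gradG eps f z)) := rdotf_cont _.
  have ho : Geps eps f \o shift z =
            cst (Geps eps f z) + rdotf (gradG eps f z) +o_ (0 : 'M[R]_(m, 2)) id.
    apply/eqaddoP => e ep.
    set K := (1 / 2 + 1 / eps) * (m * 2)%:R.
    have K0 : 0 <= K by rewrite mulr_ge0 ?ler0n // addr_ge0 // divr_ge0 // ltW.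
    have eK : 0 < e / (K + 1) by rewrite divr_gt0 //; lra.
    near=> h.
    have hN : `|h| < e / (K + 1).
      near: h; change (\forall x \near (0 : 'M[R]_(m, 2)), `|x| < e / (K + 1)); exact: (nbhs0_lt eK).
    rewrite /= opprD addrA.
    apply: le_trans (Gquad e0 e1 f0 z h) _.
    rewrite -/K.
    have n0 := normr_ge0 h.
    have : `|h| * (K + 1) < e by rewrite -ltr_pdivlMr //; lra.
    move=> hk; nra.
  have dE := diff_unique dfc ho.
  split.
    by apply/diff_locallyP; rewrite dE; split.
  by move=> h; rewrite dE.
- set L := 2 / eps - 1.
  have L0' : 0 <= L := L0 e0 e1.
  apply: (lip_cont _ (L * Num.sqrt (m * 2)%:R + 1)).
    by rewrite ltr_pwDr // mulr_ge0 // sqrtr_ge0.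
  move=> x y.
  apply: le_trans (enorm_ge _) _.
  apply: (le_trans (gradG_lip e0 e1 x y)).
  rewrite -/L; apply: (@le_trans _ _ (L * (Num.sqrt (m * 2)%:R * `|x - y|))).
    apply: ler_wpM2l => //; exact: enorm_le.
  have := normr_ge0 (x - y); nra.
- exact: gradG_lip.
Unshelve. all: by end_near.
Qed.
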